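(* Let $\omega$ be a non-quasianalytic weight function and $\sigma$ a heir of $\omega$, with associated weight matrices $\{W^x\}_{x>0}$ and $\{S^x\}_{x>0}$ respectively. Then there is $C\ge1$ such that for all $x>0$ and all $k\in\mathbb{N}$, $S^x_k\le e^{1/x}W^{Cx}_k$.
   Context: A weight function is a continuous increasing $\omega:[0,\infty)\to[0,\infty)$ with $\omega(0)=0$, $\omega(t)\to\infty$, $\omega(2t)=O(\omega(t))$, $\omega(t)=O(t)$, $\log t=o(\omega(t))$, and $\varphi_\omega(t)=\omega(e^t)$ convex; it is non-quasianalytic if $\int_0^\infty\frac{\omega(t)}{1+t^2}dt<\infty$. Normalizing $\omega|_{[0,1]}=0$, $\varphi_\omega^*(t)=\sup_{s\ge0}(st-\varphi_\omega(s))$ and the weight matrix is $W^x_k=\exp(\frac1x\varphi_\omega^*(xk))$; likewise $S^x_k=\exp(\frac1x\varphi^*_\sigma(xk))$. A weight function $\sigma$ is a heir of $\omega$ if $\sigma(t)=o(t)$ as $t\to\infty$ and there is $C>0$ with $\int_1^\infty\frac{\omega(tu)}{u^2}du\le C\sigma(t)+C$ for all $t>0$. *)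

(* Defs.v *)
From Stdlib Require Import Reals Lra ClassicalEpsilon.
Open Scope R_scope.

Definition cont_on_nonneg (w : R -> R) : Prop :=
  forall t, 0 <= t -> forall eps, 0 < eps -> exists d, 0 < d /\
    forall u, 0 <= u -> Rabs (u - t) < d -> Rabs (w u - w t) < eps.

Definition phi_of (w : R -> R) : R -> R := fun t => w (exp t).

Definition convex_on_R (f : R -> R) : Prop :=
  forall a b l, 0 <= l <= 1 ->
    f (l * a + (1 - l) * b) <= l * f a + (1 - l) * f b.

(* A weight function omega : [0,oo) -> [0,oo) (values on t < 0 irrelevant). *)
Definition weight_function (w : R -> R) : Prop :=
  cont_on_nonneg w /\
  (forall t, 0 <= t -> 0 <= w t) /\
  (forall s t, 0 <= s -> s <= t -> w s <= w t) /\
  w 0 = 0 /\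
  (forall M, exists T, forall t, T <= t -> M <= w t) /\
  (exists L T, forall t, T <= t -> w (2 * t) <= L * w t) /\
  (exists L T, forall t, T <= t -> w t <= L * t) /\
  (forall eps, 0 < eps -> exists T, 0 < T /\
     forall t, T <= t -> Rabs (ln t) <= eps * w t) /\
  convex_on_R (phi_of w).

Definition normalized (w : R -> R) : Prop :=
  forall t, 0 <= t <= 1 -> w t = 0.

Definition improper_int (f : R -> R) (a l : R) : Prop :=
  (forall T, a <= T -> inhabited (Riemann_integrable f a T)) /\
  (forall eps, 0 < eps -> exists T0, forall T (pr : Riemann_integrable f a T),
      T0 <= T -> Rabs (RiemannInt pr - l) < eps).

Definition non_quasianalytic (w : R -> R) : Prop :=
  exists l, improper_int (fun t => w t / (1 + t ^ 2)) 0 l.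

Definition heir (w s : R -> R) : Prop :=
  (forall eps, 0 < eps -> exists T, forall t, T <= t -> s t <= eps * t) /\
  exists C, 0 < C /\ forall t, 0 < t ->
    exists l, improper_int (fun u => w (t * u) / u ^ 2) 1 l /\ l <= C * s t + C.

Definition young_set (phi : R -> R) (t : R) : R -> Prop :=
  fun y => exists s, 0 <= s /\ y = s * t - phi s.

Definition young_conj (phi : R -> R) (t : R) : R :=
  epsilon (inhabits 0) (fun v => is_lub (young_set phi t) v).

Definition weight_matrix (w : R -> R) (x : R) (k : nat) : R :=
  exp (young_conj (phi_of w) (x * INR k) / x).

(* Main.v *)
Require Import Defs.
From Stdlib Require Import Reals Lra ClassicalEpsilon.
Open Scope R_scope.

Lemma quarter_le (w : R -> R) (t l : R) :
  (forall a, 0 <= a -> 0 <= w a) ->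
  (forall a b, 0 <= a -> a <= b -> w a <= w b) -> 0 < t ->
  improper_int (fun u => w (t * u) / u ^ 2) 1 l -> w t / 4 <= l.
Proof.
  intros Hnn Hmono Ht [Hint Hlim].
  destruct (Rle_dec (w t / 4) l) as [H|H]; [exact H|exfalso].
  apply Rnot_le_lt in H.
  set (eps := (w t / 4 - l) / 2).
  assert (Heps : 0 < eps) by (unfold eps; lra).
  destruct (Hlim eps Heps) as [T0 HT0].
  set (T := Rmax T0 2).
  assert (H2T : 2 <= T) by (unfold T; apply Rmax_r).
  assert (HT0T : T0 <= T) by (unfold T; apply Rmax_l).
  destruct (Hint T ltac:(lra)) as [pr].
  specialize (HT0 T pr HT0T).
  set (f := fun u => w (t * u) / u ^ 2) in *.
  assert (Hc1 : 1 <= 2 <= T) by lra.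
  pose (pr12 := RiemannInt_P22 pr Hc1).
  pose (pr2T := RiemannInt_P23 pr Hc1).
  pose proof (RiemannInt_P26 pr12 pr2T pr) as Hs.
  assert (Hpos : 0 <= RiemannInt pr2T).
  { pose proof (RiemannInt_P19 (RiemannInt_P14 2 T 0) pr2T H2T) as Hc.
    rewrite RiemannInt_P15 in Hc. apply Rle_trans with (0 * (T - 2)); [lra|].
    apply Hc. intros u Hu. unfold fct_cte, f.
    apply Rmult_le_pos.
    - apply Hnn; nra.
    - apply Rlt_le, Rinv_0_lt_compat; nra. }
  assert (H12 : w t / 4 <= RiemannInt pr12).
  { pose proof (RiemannInt_P19 (RiemannInt_P14 1 2 (w t / 4)) pr12 ltac:(lra)) as Hc.
    rewrite RiemannInt_P15 in Hc. replace (w t / 4) with (w t / 4 * (2 - 1)) by ring.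
    apply Hc. intros u Hu. unfold fct_cte, f.
    assert (Hw : w t <= w (t * u)) by (apply Hmono; nra).
    assert (0 <= w t) by (apply Hnn; lra).
    apply Rle_trans with (w t / u ^ 2).
    - unfold Rdiv. apply Rmult_le_compat_l; [lra|].
      apply Rinv_le_contravar; nra.
    - unfold Rdiv. apply Rmult_le_compat_r; [|lra].
      apply Rlt_le, Rinv_0_lt_compat; nra. }
  apply Rabs_def2 in HT0. unfold eps in HT0. lra.
Qed.

Lemma young_bound (w : R -> R) (y : R) :
  weight_function w -> 0 <= y -> bound (young_set (phi_of w) y).
Proof.
  intros (_ & Hnn & _ & _ & _ & _ & _ & Hlog & _) Hy.
  destruct (Hlog (/ (y + 1)) ltac:(apply Rinv_0_lt_compat; lra)) as [T [HT HTl]].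
  exists (y * Rabs (ln T)). intros v [r [Hr ->]]. unfold phi_of.
  destruct (Rle_dec T (exp r)) as [H|H].
  - specialize (HTl _ H). rewrite ln_exp, Rabs_pos_eq in HTl by lra.
    assert (Hw : (y + 1) * r <= w (exp r)).
    { apply Rmult_le_reg_l with (/ (y + 1)). apply Rinv_0_lt_compat; lra.
      rewrite <- Rmult_assoc, Rinv_l, Rmult_1_l by lra. exact HTl. }
    assert (0 <= y * Rabs (ln T)) by (apply Rmult_le_pos; [lra|apply Rabs_pos]).
    nra.
  - apply Rnot_le_lt in H.
    assert (Hr2 : r < ln T).
    { rewrite <- (ln_exp r). apply ln_increasing; [apply exp_pos|exact H]. }
    assert (0 <= w (exp r)) by (apply Hnn; apply Rlt_le, exp_pos).
    assert (ln T <= Rabs (ln T)) by apply Rle_abs.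
    nra.
Qed.

Lemma young_lub (phi : R -> R) (y : R) :
  bound (young_set phi y) -> is_lub (young_set phi y) (young_conj phi y).
Proof.
  intros Hb. unfold young_conj. apply epsilon_spec.
  destruct (completeness _ Hb) as [m Hm].
  - exists (0 * y - phi 0). exists 0. split; [lra|reflexivity].
  - exists m. exact Hm.
Qed.

Lemma young_compare (w s : R -> R) (D y : R) :
  weight_function w -> 1 <= D -> 0 <= y ->
  (forall r, w (exp r) <= D * s (exp r) + D) ->
  young_conj (phi_of s) y <= 1 + young_conj (phi_of w) (D * y) / D.
Proof.
  intros Hw HD Hy Hcmp.
  pose proof (young_lub _ _ (young_bound w (D * y) Hw ltac:(nra))) as [Hub _].
  set (Lw := young_conj (phi_of w) (D * y)) in *.
  assert (Hs : is_upper_bound (young_set (phi_of s) y) (1 + Lw / D)).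
  { intros v [r [Hr ->]]. unfold phi_of.
    assert (Hv : r * (D * y) - phi_of w r <= Lw) by (apply Hub; exists r; split; [lra|reflexivity]).
    unfold phi_of in Hv. specialize (Hcmp r).
    assert (Hx : r * y - s (exp r) <= (r * (D * y) - w (exp r)) / D + 1).
    { apply Rmult_le_reg_l with D; [lra|].
      unfold Rdiv. rewrite Rmult_plus_distr_l, <- Rmult_assoc,
        (Rmult_comm D (r * (D * y) - w (exp r))), Rmult_assoc, Rinv_r by lra. nra. }
    apply Rle_trans with ((r * (D * y) - w (exp r)) / D + 1); [exact Hx|].
    unfold Rdiv. apply Rplus_le_reg_r with (-1).
    replace ((r * (D * y) - w (exp r)) * / D + 1 + -1) with ((r * (D * y) - w (exp r)) * / D) by ring.
    replace (1 + Lw * / D + -1) with (Lw * / D) by ring.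
    apply Rmult_le_compat_r; [apply Rlt_le, Rinv_0_lt_compat; lra|exact Hv]. }
  assert (Hb : bound (young_set (phi_of s) y)) by (exists (1 + Lw / D); exact Hs).
  destruct (young_lub _ _ Hb) as [_ Hl]. apply Hl. exact Hs.
Qed.

Theorem lemma3p15 (w s : R -> R) :
  weight_function w -> normalized w -> non_quasianalytic w ->
  weight_function s -> normalized s -> heir w s ->
  exists C, 1 <= C /\
    forall (x : R) (k : nat), 0 < x ->
      weight_matrix s x k <= exp (1 / x) * weight_matrix w (C * x) k.
Proof.
  intros Hw _ _ Hs _ [_ [C [HC Hh]]].
  pose proof Hw as (_ & Hwnn & Hwmono & _).
  pose proof Hs as (_ & Hsnn & _).
  set (D := Rmax 1 (4 * C)).
  assert (HD1 : 1 <= D) by apply Rmax_l.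
  assert (HD4 : 4 * C <= D) by apply Rmax_r.
  assert (Hcmp : forall r, w (exp r) <= D * s (exp r) + D).
  { intros r. pose proof (exp_pos r) as He.
    destruct (Hh _ He) as [l [Hi Hl]].
    pose proof (quarter_le w (exp r) l Hwnn Hwmono He Hi).
    assert (0 <= s (exp r)) by (apply Hsnn; lra). nra. }
  exists D. split; [exact HD1|]. intros x k Hx.
  unfold weight_matrix. rewrite <- exp_plus.
  assert (Hk : 0 <= INR k) by apply pos_INR.
  pose proof (young_compare w s D (x * INR k) Hw HD1 ltac:(nra) Hcmp) as H.
  replace (D * x * INR k) with (D * (x * INR k)) by ring.
  set (a := young_conj (phi_of s) (x * INR k)) in *.
  set (b := young_conj (phi_of w) (D * (x * INR k))) in *.
  assert (Hineq : a / x <= 1 / x + b / (D * x)).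
  { replace (1 / x + b / (D * x)) with ((1 + b / D) / x) by (field; lra).
    unfold Rdiv. apply Rmult_le_compat_r; [apply Rlt_le, Rinv_0_lt_compat; lra|].
    exact H. }
  destruct (Rle_lt_or_eq_dec _ _ Hineq) as [Hlt|Heq].
  - left. apply exp_increasing. exact Hlt.
  - right. rewrite Heq. reflexivity.
Qed.
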